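(* Consider the atomic model under the Shapley scheme with one large player of stake $a$ and all other players of stake $1$, and a $(k,l)$-partition with $k<h$. If $k\le h-2$, the partition is a Nash equilibrium provided that (1) $\frac{k(k+1)}{h-a}\le l\le\frac{(k+1)(k+2)}{h-a}$ and (2) $l\ge\frac{a(k+1)}{k-h+a+1}$. If $k=h-1$, the same conclusion holds with the upper bound in (1) replaced by $l\le\frac{(k+1)(k+2)}{h+1-a}=\frac{h(h+1)}{h+1-a}$.
   Context: Atomic model with threshold $h$: one player has stake $a$ (the large player) and all others stake $1$ (small players), where $h,a$ are integers with $2\le a\le h-1$. Pools partition the players; a pool $S$ has reward $\rho(S)=1$ if its total stake is at least $h$ and $0$ otherwise. Shapley scheme: player $i$ in pool $S$ receives $\phi_i(S)=\sum_{T\subseteq S\setminus\{i\}}\frac{|T|!(|S|-|T|-1)!}{|S|!}(\rho(T\cup\{i\})-\rho(T))$. A partition into winning pools is a Nash equilibrium if no player can strictly increase her payment by moving to another pool of the partition or opening a new pool alone. For integers $k,l$ with $k+a\ge h$ and $l\ge h+1$, a $(k,l)$-partition is a partition consisting only of pools of the following types (not necessarily all present): Type A: exactly one large player and $k$ small players; Type B: $l$ small players; Type C: $l-1$ small players. *)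

(* Defs.v *)
From mathcomp Require Import all_boot all_order all_algebra.
Set Implicit Arguments. Unset Strict Implicit. Unset Printing Implicit Defensive.
Import Order.TTheory GRing.Theory Num.Theory.
Local Open Scope ring_scope.

Section Model.
Variables (T : finType) (w : T -> nat) (h : nat).

Definition rho (S : {set T}) : rat :=
  if (h <= \sum_(i in S) w i)%N then 1 else 0.

Definition shapley (S : {set T}) (i : T) : rat :=
  \sum_(U in powerset (S :\ i))
     ((#|U|`! * (#|S| - #|U| - 1)`!)%:R / (#|S|`!)%:R) * (rho (i |: U) - rho U).

Definition nash_equilibrium (P : {set {set T}}) : Prop :=
  [/\ partition P [set: T],
      (forall S, S \in P -> rho S = 1) &
      forall i : T,
        (forall S', S' \in P -> i \notin S' ->
           shapley (i |: S') i <= shapley (pblock P i) i)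
        /\ shapley [set i] i <= shapley (pblock P i) i].
End Model.

Definition kl_partition (T : finType) (L : T) (k l : nat) (P : {set {set T}}) : Prop :=
  partition P [set: T] /\
  forall S, S \in P ->
    [|| (L \in S) && (#|S| == k.+1),
        (L \notin S) && (#|S| == l)
      | (L \notin S) && (#|S| == l.-1)].

(* Main.v *)
Require Import Defs.
From mathcomp Require Import all_boot all_order all_algebra zify ring.
Set Implicit Arguments. Unset Strict Implicit. Unset Printing Implicit Defensive.
Import Order.TTheory GRing.Theory Num.Theory.
Local Open Scope ring_scope.

Lemma sum_powerset_card (T : finType) (A : {set T}) (f : nat -> rat) :
  \sum_(U in powerset A) f #|U| = \sum_(j < #|A|.+1) 'C(#|A|, j)%:R * f j.
Proof.
rewrite (partition_big (fun U : {set T} => (inord #|U| : 'I_#|A|.+1)) predT) //=.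
apply: eq_bigr => j _.
rewrite (eq_bigr (fun _ => f j)); last first.
  move=> U /andP[UA /eqP <-]; rewrite inordK // ltnS subset_leq_card //.
  by rewrite -powersetE.
rewrite sumr_const mulr_natl; congr (_ *+ _).
rewrite -cards_draws; apply: eq_card => U; rewrite !inE /=.
rewrite unfold_in /= powersetE; case UA: (U \subset A) => //=.
have Ult : (#|U| < #|A|.+1)%N by rewrite ltnS subset_leq_card.
apply/eqP/eqP => [<-|E]; first by rewrite inordK.
by apply/val_inj; rewrite /= inordK // E.
Qed.

Lemma sum_powersetU1 (T : finType) (A : {set T}) x (F : {set T} -> rat) :
  x \notin A ->
  \sum_(U in powerset (x |: A)) F U =
  \sum_(U in powerset A) F U + \sum_(U in powerset A) F (x |: U).
Proof.
move=> xA.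
rewrite (bigID (fun U : {set T} => x \in U)) /= addrC; congr (_ + _).
  apply: eq_bigl => U; rewrite !inE.
  apply/andP/idP => [[UA xU]|UA].
    apply/subsetP => y yU; move/subsetP: UA => /(_ y yU); rewrite !inE.
    by case/orP => // /eqP E; move: xU; rewrite -E yU.
  split; last by apply: contra xA => xU; move/subsetP: UA => /(_ x xU).
  by apply: subset_trans UA (subsetUr _ _).
rewrite (reindex_onto (fun U => x |: U) (fun U => U :\ x)); last first.
  by move=> U /andP[_ xU]; rewrite setD1K.
apply: eq_bigl => U; rewrite !inE eqxx andbT.
apply/andP/idP => [[UA /eqP E]|UA].
  have xU : x \notin U by rewrite -E !inE eqxx.
  apply/subsetP => y yU; have : y \in x |: A by move/subsetP: UA; apply; rewrite !inE yU orbT.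
  by rewrite !inE; case/orP => // /eqP Ey; move: xU; rewrite -Ey yU.
have xU : x \notin U by apply: contra xA => xU; move/subsetP: UA => /(_ x xU).
by rewrite setU1K // eqxx setUS.
Qed.
Lemma sum_point (M j0 : nat) (G : nat -> rat) :
  \sum_(j < M) G j * (nat_of_ord j == j0)%:R = if (j0 < M)%N then G j0 else 0.
Proof.
case: ltnP => H.
  rewrite (bigD1 (Ordinal H)) //= eqxx mulr1 big1 ?addr0 // => j ne.
  case: (eqVneq (nat_of_ord j) j0) => [E|E]; last by rewrite mulr0.
  by move: ne; rewrite -(inj_eq val_inj) /= E eqxx.
by apply: big1 => j _; rewrite ltn_eqF ?mulr0 // (leq_trans (ltn_ord j) H).
Qed.

Lemma sum_count (M c : nat) :
  \sum_(j < M) (if (c <= j)%N then 1%R else 0%R : rat) = (M - c)%:R.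
Proof.
elim: M => [|M IH]; first by rewrite big_ord0 sub0n.
rewrite big_ord_recr /= IH; case: leqP => H.
  have -> : (M.+1 - c = (M - c).+1)%N by lia.
  by rewrite -natr1.
by rewrite addr0; congr (_%:R); lia.
Qed.

Lemma nat_cancel (x y z : nat) : (0 < z)%N ->
  (x * z)%:R / (y * z)%:R = x%:R / y%:R :> rat.
Proof.
move=> z0; rewrite !natrM invfM mulrACA divff ?mulr1 //.
by rewrite pnatr_eq0 -lt0n.
Qed.

Lemma wt1 (N j : nat) : (j <= N)%N ->
  'C(N, j)%:R * ((j`! * (N.+1 - j - 1)`!)%:R / (N.+1)`!%:R) = 1 / (N.+1)%:R :> rat.
Proof.
move=> Hj; rewrite mulrA -natrM.
have -> : (N.+1 - j - 1 = N - j)%N by lia.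
rewrite bin_fact // factS.
transitivity ((1 * N`!)%:R / (N.+1 * N`!)%:R :> rat); first by rewrite mul1n.
by rewrite nat_cancel ?fact_gt0.
Qed.

Lemma wt2 (N j : nat) : (j <= N)%N ->
  'C(N, j)%:R * ((j`! * (N.+2 - j - 1)`!)%:R / (N.+2)`!%:R)
  = (N.+1 - j)%:R / (N.+1 * N.+2)%:R :> rat.
Proof.
move=> Hj; rewrite mulrA -natrM.
have E : ('C(N, j) * (j`! * (N.+2 - j - 1)`!) = (N.+1 - j) * N`!)%N.
  have -> : (N.+2 - j - 1 = (N - j).+1)%N by lia.
  rewrite -(bin_fact Hj) factS.
  have -> : (N.+1 - j = (N - j).+1)%N by lia.
  set X := 'C(N, j); set Y := j`!; set Z := (N - j)`!; nia.
rewrite E factS factS.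
have -> : (N.+2 * (N.+1 * N`!) = (N.+1 * N.+2) * N`!)%N by nia.
by rewrite nat_cancel ?fact_gt0.
Qed.

Lemma wt3 (N j : nat) : (j <= N)%N ->
  'C(N, j)%:R * (((j.+1)`! * (N.+2 - j.+1 - 1)`!)%:R / (N.+2)`!%:R)
  = (j.+1)%:R / (N.+1 * N.+2)%:R :> rat.
Proof.
move=> Hj; rewrite mulrA -natrM.
have E : ('C(N, j) * ((j.+1)`! * (N.+2 - j.+1 - 1)`!) = j.+1 * N`!)%N.
  have -> : (N.+2 - j.+1 - 1 = (N - j))%N by lia.
  rewrite -(bin_fact Hj) factS.
  set X := 'C(N, j); set Y := j`!; set Z := (N - j)`!; nia.
rewrite E factS factS.
have -> : (N.+2 * (N.+1 * N`!) = (N.+1 * N.+2) * N`!)%N by nia.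
by rewrite nat_cancel ?fact_gt0.
Qed.

Lemma diff_ind (h j : nat) : (0 < h)%N ->
  (if (h <= j.+1)%N then 1 else 0) - (if (h <= j)%N then 1 else 0)
  = (j == h.-1)%:R :> rat.
Proof.
move=> h0; case: (leqP h j.+1) => H1; case: (leqP h j) => H2; case: eqP => E;
  rewrite /= ?mulr0n ?mulr1n ?subrr ?subr0 //; lia.
Qed.

Lemma wsum (T : finType) (w : T -> nat) (L : T) (a : nat)
  (HwL : w L = a) (Hw : forall i, i != L -> w i = 1%N) (S : {set T}) :
  (\sum_(x in S) w x = if L \in S then a + #|S|.-1 else #|S|)%N.
Proof.
have W0 (U : {set T}) : L \notin U -> (\sum_(x in U) w x)%N = #|U|.
  move=> LU; rewrite (eq_bigr (fun => 1%N)) ?sum1_card // => x xU.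
  by apply: Hw; apply: contraNneq LU => <-.
case: ifP => LS; last by rewrite W0 ?LS.
rewrite (big_setD1 L LS) HwL /= W0; last by rewrite !inE eqxx.
by rewrite (cardsD1 L S) LS.
Qed.

Lemma V1 (T : finType) (w : T -> nat) (L : T) (a h : nat)
  (HwL : w L = a) (Hw : forall i, i != L -> w i = 1%N) (S : {set T}) (i : T) :
  (0 < h)%N -> i \in S -> L \notin S ->
  shapley w h S i = (if (h <= #|S|)%N then 1%N else 0%N)%:R / (#|S|)%:R.
Proof.
move=> h0 iS LS.
have cS : #|S| = (#|S :\ i|).+1 by rewrite (cardsD1 i S) iS.
set N := #|S :\ i| in cS.
rewrite /shapley.
pose f j := ((j`! * (#|S| - j - 1)`!)%:R / (#|S|`!)%:R) *
   ((if (h <= j.+1)%N then 1 else 0) - (if (h <= j)%N then 1 else 0)) : rat.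
rewrite (eq_bigr (fun U : {set T} => f #|U|)); last first.
  move=> U; rewrite powersetE => UD.
  have iU : i \notin U by apply: contraT; rewrite negbK => /(subsetP UD); rewrite !inE eqxx.
  have LU : L \notin U by apply: contra LS => /(subsetP UD); rewrite !inE => /andP[].
  rewrite /f /rho !(wsum HwL Hw) !inE (negbTE LU) orbF.
  case: eqP => [E|_]; first by move: LS; rewrite E iS.
  by rewrite cardsU1 iU.
rewrite sum_powerset_card -/N.
rewrite (eq_bigr (fun j : 'I_N.+1 => 1 / N.+1%:R *
   ((if (h.-1 <= j)%N then 1 else 0) - (if (h <= j)%N then 1 else 0)))); last first.
  move=> j _; rewrite /f mulrA cS (wt1 (N:=N) (j:=j) (ltn_ord j)); congr (_ * (_ - _)).
  by case: (leqP h j.+1) => H1; case: (leqP h.-1 j) => H2 //; lia.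
rewrite -mulr_sumr sumrB !sum_count cS.
case: leqP => H /=; rewrite ?mulr1n ?mulr0n.
  have -> : (N.+1 - h.-1 = (N.+1 - h) + 1)%N by lia.
  by rewrite natrD addrAC subrr add0r mulr1.
have -> : (N.+1 - h.-1 = 0)%N by lia.
have -> : (N.+1 - h = 0)%N by lia.
by rewrite subrr mulr0 mul0r.
Qed.

Lemma V2 (T : finType) (w : T -> nat) (L : T) (a h : nat)
  (HwL : w L = a) (Hw : forall i, i != L -> w i = 1%N) (S : {set T}) :
  L \in S ->
  shapley w h S L = ((#|S| - (h - a)) - (#|S| - h))%:R / (#|S|)%:R.
Proof.
move=> LS.
have cS : #|S| = (#|S :\ L|).+1 by rewrite (cardsD1 L S) LS.
set N := #|S :\ L| in cS.
rewrite /shapley.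
pose f j := ((j`! * (#|S| - j - 1)`!)%:R / (#|S|`!)%:R) *
   ((if (h <= a + j)%N then 1 else 0) - (if (h <= j)%N then 1 else 0)) : rat.
rewrite (eq_bigr (fun U : {set T} => f #|U|)); last first.
  move=> U; rewrite powersetE => UD.
  have LU : L \notin U by apply: contraT; rewrite negbK => /(subsetP UD); rewrite !inE eqxx.
  rewrite /f /rho !(wsum HwL Hw) !inE eqxx (negbTE LU) /=.
  by rewrite cardsU1 LU.
rewrite sum_powerset_card -/N.
rewrite (eq_bigr (fun j : 'I_N.+1 => 1 / N.+1%:R *
   ((if (h - a <= j)%N then 1 else 0) - (if (h <= j)%N then 1 else 0)))); last first.
  move=> j _; rewrite /f mulrA cS (wt1 (N:=N) (j:=j) (ltn_ord j)); congr (_ * (_ - _)).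
  by rewrite leq_subLR.
rewrite -mulr_sumr sumrB !sum_count cS -natrB; last by lia.
by rewrite mulrC mul1r.
Qed.

Lemma V3 (T : finType) (w : T -> nat) (L : T) (a h : nat)
  (HwL : w L = a) (Hw : forall i, i != L -> w i = 1%N) (S : {set T}) (i : T) (N : nat) :
  (0 < h)%N -> (a < h)%N -> i \in S -> L \in S -> i != L -> #|S| = N.+2 ->
  shapley w h S i =
  ((if (h <= N.+1)%N then N.+2 - h else 0) + (if (h - a <= N.+1)%N then h - a else 0))%N%:R
    / (N.+1 * N.+2)%:R.
Proof.
move=> h0 ah iS LS iL cS.
have LD : L \in S :\ i by rewrite !inE eq_sym iL.
have LD' : L \notin S :\ i :\ L by rewrite !inE eqxx.
have cD : #|S :\ i :\ L| = N.
  by move: cS; rewrite (cardsD1 i S) iS (cardsD1 L (S :\ i)) LD => -[].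
rewrite /shapley -[S :\ i](setD1K LD) sum_powersetU1 //.
pose f1 j := ((j`! * (#|S| - j - 1)`!)%:R / (#|S|`!)%:R) *
   ((if (h <= j.+1)%N then 1 else 0) - (if (h <= j)%N then 1 else 0)) : rat.
pose f2 j := (((j.+1)`! * (#|S| - j.+1 - 1)`!)%:R / (#|S|`!)%:R) *
   ((if (h <= a + j.+1)%N then 1 else 0) - (if (h <= a + j)%N then 1 else 0)) : rat.
rewrite (eq_bigr (fun U : {set T} => f1 #|U|)); last first.
  move=> U; rewrite powersetE => UD.
  have LU : L \notin U by apply: contraT; rewrite negbK => /(subsetP UD); rewrite !inE eqxx.
  have iU : i \notin U by apply: contraT; rewrite negbK => /(subsetP UD); rewrite !inE eqxx andbF.
  rewrite /f1 /rho !(wsum HwL Hw) !inE eq_sym (negbTE iL) (negbTE LU) /=.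
  by rewrite cardsU1 iU.
rewrite [X in _ + X](eq_bigr (fun U : {set T} => f2 #|U|)); last first.
  move=> U; rewrite powersetE => UD.
  have LU : L \notin U by apply: contraT; rewrite negbK => /(subsetP UD); rewrite !inE eqxx.
  have iU : i \notin U by apply: contraT; rewrite negbK => /(subsetP UD); rewrite !inE eqxx andbF.
  have iLU : i \notin L |: U by rewrite !inE negb_or iL iU.
  rewrite /f2 /rho !(wsum HwL Hw) !inE !eqxx /= orbT.
  rewrite !cardsU1 iLU LU /=; congr (_ * (_ - _)).
rewrite !sum_powerset_card cD.
rewrite (eq_bigr (fun j : 'I_N.+1 => (N.+1 - j)%:R / (N.+1 * N.+2)%:R * (nat_of_ord j == h.-1)%:R)); last first.
  move=> j _; rewrite /f1 mulrA cS (wt2 (N:=N) (j:=j) (ltn_ord j)).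
  by rewrite diff_ind.
rewrite [X in _ + X](eq_bigr (fun j : 'I_N.+1 => (j.+1)%:R / (N.+1 * N.+2)%:R * (nat_of_ord j == (h - a - 1)%N)%:R)); last first.
  move=> j _; rewrite /f2 mulrA cS (wt3 (N:=N) (j:=j) (ltn_ord j)).
  have -> : (h <= a + j.+1)%N = (h - a - 1 <= j)%N by lia.
  have -> : (h <= a + j)%N = (h - a - 1 < j)%N by lia.
  congr (_ * _); case: (leqP (h - a - 1) j) => H1; case: (ltnP (h - a - 1) j) => H2;
    case: eqP => E; rewrite /= ?mulr0n ?mulr1n ?subrr ?subr0 //; lia.
rewrite (sum_point _ _ (fun j => (N.+1 - j)%:R / (N.+1 * N.+2)%:R)).
rewrite (sum_point _ _ (fun j => (j.+1)%:R / (N.+1 * N.+2)%:R)).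
rewrite natrD mulrDl; congr (_ + _).
  case: leqP => H1; case: ltnP => H2; try lia; first by rewrite mul0r.
  by congr (_ / _); congr (_%:R); lia.
case: leqP => H1; case: ltnP => H2; try lia; first by rewrite mul0r.
by congr (_ / _); congr (_%:R); lia.
Qed.

Lemma le_frac (x y u v : nat) : (0 < y)%N -> (0 < v)%N -> (x * v <= u * y)%N ->
  x%:R / y%:R <= u%:R / v%:R :> rat.
Proof.
move=> y0 v0 H.
by rewrite ler_pdivrMr ?ltr0n // mulrAC ler_pdivlMr ?ltr0n // -!natrM ler_nat.
Qed.

Lemma frac_le (x y z : nat) : (0 < z)%N -> x%:R / z%:R <= y%:R :> rat -> (x <= y * z)%N.
Proof. by move=> z0; rewrite ler_pdivrMr ?ltr0n // -natrM ler_nat. Qed.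

Lemma frac_ge (x y z : nat) : (0 < z)%N -> y%:R <= x%:R / z%:R :> rat -> (y * z <= x)%N.
Proof. by move=> z0; rewrite ler_pdivlMr ?ltr0n // -natrM ler_nat. Qed.

Lemma frac_ge0 (x y : nat) : 0 <= x%:R / y%:R :> rat.
Proof. by rewrite divr_ge0 ?ler0n. Qed.



Unset Implicit Arguments. Set Strict Implicit.

Definition keep (P : Prop) : Prop := P.

Theorem lemma3p9 (T : finType) (w : T -> nat) (L : T) (h a k l : nat)
  (Ha : (2 <= a)%N) (Hah : (a <= h - 1)%N)
  (HwL : w L = a) (Hw : forall i, i != L -> w i = 1%N)
  (Hka : (h <= k + a)%N) (Hl : (h.+1 <= l)%N) (Hkh : (k < h)%N)
  (P : {set {set T}}) (HP : kl_partition L k l P)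
  (H1lo : (k * k.+1)%:R / (h%:R - a%:R) <= (l%:R : rat))
  (H1hi_gen : (k.+2 <= h)%N ->
              (l%:R : rat) <= (k.+1 * k.+2)%:R / (h%:R - a%:R))
  (H1hi_last : k = (h - 1)%N ->
              (l%:R : rat) <= (k.+1 * k.+2)%:R / (h%:R + 1 - a%:R))
  (H2 : (a * k.+1)%:R / (k%:R - h%:R + a%:R + 1) <= (l%:R : rat)) :
  nash_equilibrium w h P.
Proof.
have h0 : (0 < h)%N by lia.
have ah : (a < h)%N by lia.
have Ehah : h%:R - a%:R = (h - a)%N%:R :> rat by rewrite natrB //; lia.
rewrite Ehah in H1lo H1hi_gen.
have H1lo' := frac_le (ltac:(lia) : (0 < h - a)%N) H1lo.
have H1gen' : (k.+2 <= h)%N -> (l * (h - a) <= k.+1 * k.+2)%N.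
  by move=> H; apply: frac_ge (H1hi_gen H); lia.
have H1last' : k = (h - 1)%N -> (l * (h.+1 - a) <= k.+1 * k.+2)%N.
  move=> H; apply: frac_ge; first lia.
  have <- : h%:R + 1 - a%:R = (h.+1 - a)%N%:R :> rat by rewrite natrB ?natr1 //; lia.
  exact: H1hi_last.
have H2' : (a * k.+1 <= l * (k.+1 + a - h))%N.
  apply: frac_le; first lia.
  have <- : k%:R - h%:R + a%:R + 1 = (k.+1 + a - h)%N%:R :> rat.
    rewrite natrB; last lia.
    rewrite !natrD -addn1 natrD; ring.
  exact: H2.
move: HP => [Hpart Htype].
clear Ehah H1lo H1hi_gen H1hi_last H2.
move: H1lo' H1gen' H1last' H2'.
have Kk : (1 <= k)%N by lia.
move=> H1lo' H1gen' H1last' H2'.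
have K1 : keep (k * k.+1 <= l * (h - a))%N := H1lo'.
have K2 : keep ((k.+2 <= h)%N -> (l * (h - a) <= k.+1 * k.+2)%N) := H1gen'.
have K3 : keep (k = (h - 1)%N -> (l * (h.+1 - a) <= k.+1 * k.+2)%N) := H1last'.
have K4 : keep (a * k.+1 <= l * (k.+1 + a - h))%N := H2'.
clear H1lo' H1gen' H1last' H2'.
have := Hpart; rewrite /partition => /and3P[/eqP Hcov Htriv H0].
have mP x : pblock P x \in P by apply: pblock_mem; rewrite Hcov inE.
have iP x : x \in pblock P x by rewrite mem_pblock Hcov inE.
have cL S : S \in P -> L \in S -> #|S| = k.+1.
  by move=> SP LS; have := Htype S SP; rewrite LS /= !orbF => /eqP.
have cN S : S \in P -> L \notin S -> (#|S| = l \/ #|S| = l.-1).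
  move=> SP LS; have := Htype S SP; rewrite (negbTE LS) /=.
  by case/orP => /eqP; [left|right].
have sameL S S' : S \in P -> S' \in P -> L \in S -> L \in S' -> S = S'.
  by move=> SP S'P LS LS'; rewrite -(def_pblock Htriv SP LS) (def_pblock Htriv S'P LS').
split => //.
  move=> S SP; rewrite /rho (wsum HwL Hw); case: (boolP (L \in S)) => LS.
    by rewrite (cL S SP LS) /=; case: leqP => // H; lia.
  by have [E|E] := cN S SP LS; rewrite E; case: leqP => // H; lia.
move=> i.
case: (eqVneq i L) => [Ei|iL].
  subst i.
  have LB := iP L; have cB := cL _ (mP L) LB.
  rewrite (V2 h HwL Hw LB) cB; split.
    move=> S' S'P LS'.
    rewrite (V2 h HwL Hw (S := L |: S')) ?setU11 // cardsU1 LS' /=.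
    apply: le_frac; [lia|lia|].
    have -> : ((k.+1 - (h - a)) - (k.+1 - h) = k.+1 + a - h)%N by lia.
    have [E|E] := cN S' S'P LS'; rewrite E.
      have -> : ((1 + l - (h - a)) - (1 + l - h) = a)%N by lia.
      apply: leq_trans (K4 : (a * k.+1 <= l * (k.+1 + a - h))%N) _; rewrite mulnC; apply: leq_mul => //; lia.
    have -> : ((1 + l.-1 - (h - a)) - (1 + l.-1 - h) = a)%N by lia.
    have -> : (1 + l.-1 = l)%N by lia.
    by apply: leq_trans (K4 : (a * k.+1 <= l * (k.+1 + a - h))%N) _; rewrite mulnC.
  rewrite (V2 h HwL Hw (S := [set L])) ?set11 // cards1.
  have -> : ((1 - (h - a)) - (1 - h) = 0)%N by lia.
  by rewrite mul0r frac_ge0.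
have BP := mP i; have iB := iP i.
case: (boolP (L \in pblock P i)) => LB.
  have cB := cL _ BP LB.
  have cB' : #|pblock P i| = k.-1.+2 by rewrite cB prednK.
  rewrite (V3 HwL Hw h0 ah iB LB iL cB') !prednK //.
  have -> : (h <= k)%N = false by clear -Hkh; lia.
  have -> : (h - a <= k)%N = true by clear -Hka; lia.
  rewrite add0n; split.
    move=> S' S'P iS'.
    have LS' : L \notin S'.
      by apply/negP => LS'; move: iS'; rewrite -(sameL _ _ BP S'P LB LS') iB.
    rewrite (V1 HwL Hw h0 (S := i |: S')) ?setU11 //; last first.
      by rewrite !inE negb_or eq_sym iL.
    rewrite cardsU1 iS' /=.
    have -> : (h <= 1 + #|S'|)%N = true by have [E|E] := cN S' S'P LS'; clear -E Hl; lia.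
    apply: le_frac; [by rewrite add1n|by rewrite muln_gt0 Kk|].
    rewrite mul1n; apply: leq_trans (K1 : (k * k.+1 <= l * (h - a))%N) _; rewrite mulnC; apply: leq_mul => //.
    by have [E|E] := cN S' S'P LS'; rewrite E; clear -Hl; lia.
  rewrite (V1 HwL Hw h0 (S := [set i])) ?set11 //; last by rewrite inE eq_sym iL.
  rewrite cards1 (_ : (h <= 1)%N = false) /=; last by clear -ah Ha; lia.
  by rewrite mul0r frac_ge0.
have cB := cN _ BP LB.
rewrite (V1 HwL Hw h0 iB LB).
have -> : (h <= #|pblock P i|)%N = true by case: cB => ->; clear -Hl; lia.
split.
  move=> S' S'P iS'.
  case: (boolP (L \in S')) => LS'.
    have cS' := cL _ S'P LS'.
    have ciS : #|i |: S'| = k.+2 by rewrite cardsU1 iS' cS'.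
    rewrite (V3 HwL Hw h0 ah (setU11 i S') _ iL ciS); last by rewrite !inE LS' orbT.
    apply: le_frac; [by rewrite muln_gt0|case: cB => ->; clear -Hl h0; lia|].
    rewrite mul1n.
    case: (leqP k.+2 h) => Hk.
      have -> : (h <= k.+1)%N = false by clear -Hk; lia.
      have -> : (h - a <= k.+1)%N = true by clear -Hka; lia.
      apply: leq_trans ((K2 : (k.+2 <= h)%N -> (l * (h - a) <= k.+1 * k.+2)%N) Hk); rewrite add0n mulnC; apply: leq_mul => //.
      by case: cB => ->; clear -Hl; lia.
    have -> : (h <= k.+1)%N = true by clear -Hk; lia.
    have -> : (h - a <= k.+1)%N = true by clear -Hka; lia.
    have Hk' : k = (h - 1)%N by clear -Hk Hkh; lia.
    apply: leq_trans ((K3 : k = (h - 1)%N -> (l * (h.+1 - a) <= k.+1 * k.+2)%N) Hk'); rewrite mulnC; apply: leq_mul; first by case: cB => ->; clear -Hl; lia.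
    by clear -Hk' ah Hkh; lia.
  rewrite (V1 HwL Hw h0 (S := i |: S')) ?setU11 //; last first.
    by rewrite !inE negb_or eq_sym iL.
  rewrite cardsU1 iS' /=.
  have -> : (h <= 1 + #|S'|)%N = true by have [E|E] := cN S' S'P LS'; clear -E Hl; lia.
  apply: le_frac; [by rewrite add1n|case: cB => ->; clear -Hl h0; lia|].
  by have [E|E] := cN S' S'P LS'; case: cB => ->; rewrite E; clear -Hl; lia.
rewrite (V1 HwL Hw h0 (S := [set i])) ?set11 //; last by rewrite inE eq_sym iL.
rewrite cards1 (_ : (h <= 1)%N = false) /=; last by clear -ah Ha; lia.
by rewrite mul0r frac_ge0.
Qed.
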